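(* Let $\mathcal{LS}_{\mathfrak{B}_1}$ be the operad (variety) of left-symmetric algebras over a field of characteristic $0$ satisfying the identity $(ab)c-(ba)c-(ac)b+(ca)b+(bc)a-(cb)a=0$. Its Koszul dual operad $\mathcal{LS}_{\mathfrak{B}_1}^{(!)}$ is the operad of assosymmetric algebras satisfying the left-commutative identity $a(bc)=b(ac)$.
   Context: A left-symmetric algebra is an algebra whose associator $(a,b,c)=(ab)c-a(bc)$ satisfies $(a,b,c)=(b,a,c)$. An algebra is assosymmetric if its associator is invariant under all permutations of $a,b,c$. The Koszul dual of a binary quadratic operad is taken in the sense of Ginzburg–Kapranov; equivalently, $\mathcal{P}^{(!)}$ is the quadratic operad whose algebras $U$ are defined by exactly those degree-3 identities making $S\otimes U$, with product $(a\otimes u)(b\otimes v)=ab\otimes uv$, Lie-admissible for every $\mathcal{P}$-algebra $S$. *)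

(* Defs.v *)
From HB Require Import structures.
From mathcomp Require Import all_boot all_order fingroup perm all_algebra.
Set Implicit Arguments. Unset Strict Implicit. Unset Printing Implicit Defensive.
Import GRing.Theory.
Local Open Scope ring_scope.

(* Multilinear degree-3 nonassociative monomials in the variables x_0=a, x_1=b, x_2=c:
   (false, s) stands for (x_{s 0} x_{s 1}) x_{s 2}   (left-normed),
   (true,  s) stands for  x_{s 0} (x_{s 1} x_{s 2})  (right-normed).
   This is a basis of the 12-dimensional space of multilinear degree-3 elements
   of the free (magmatic) algebra; a multilinear identity of degree 3 is a
   coefficient function on this basis. *)
Definition mono := (bool * 'S_3)%type.
Definition poly3 (F : fieldType) := mono -> F.

Definition o0 : 'I_3 := @Ordinal 3 0 isT.
Definition o1 : 'I_3 := @Ordinal 3 1 isT.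
Definition o2 : 'I_3 := @Ordinal 3 2 isT.

Definition mon (F : fieldType) (b : bool) (i j k : 'I_3) : poly3 F :=
  fun m => if [&& m.1 == b, m.2 o0 == i, m.2 o1 == j & m.2 o2 == k] then 1 else 0.

Definition L (F : fieldType) := @mon F false.
Definition R (F : fieldType) := @mon F true.

Definition padd (F : fieldType) (f g : poly3 F) : poly3 F := fun m => f m + g m.
Definition psub (F : fieldType) (f g : poly3 F) : poly3 F := fun m => f m - g m.

Definition assoc (F : fieldType) (i j k : 'I_3) : poly3 F :=
  psub (L F i j k) (R F i j k).

Definition p_LS (F : fieldType) : poly3 F := psub (assoc F o0 o1 o2) (assoc F o1 o0 o2).
Definition p_B1 (F : fieldType) : poly3 F :=
  padd (psub (L F o0 o1 o2) (L F o1 o0 o2))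
  (padd (psub (L F o2 o0 o1) (L F o0 o2 o1))
        (psub (L F o1 o2 o0) (L F o2 o1 o0))).
(* assosymmetric: (a,b,c) - (b,a,c) and (a,b,c) - (a,c,b) (these generate
   invariance under all permutations) *)
Definition p_AS1 (F : fieldType) : poly3 F := psub (assoc F o0 o1 o2) (assoc F o1 o0 o2).
Definition p_AS2 (F : fieldType) : poly3 F := psub (assoc F o0 o1 o2) (assoc F o0 o2 o1).
Definition p_LC (F : fieldType) : poly3 F := psub (R F o0 o1 o2) (R F o1 o0 o2).

(* Substitution x_j |-> x_{t j} acting on multilinear polynomials:
   monomial (b, s) is sent to (b, s * t) (mathcomp: (s * t) x = t (s x)). *)
Definition pact (F : fieldType) (t : 'S_3) (f : poly3 F) : poly3 F :=
  fun m => f (m.1, m.2 * t^-1)%g.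

Definition pzero (F : fieldType) : poly3 F := fun _ => 0.

(* The space of multilinear degree-3 consequences of a finite list of
   multilinear identities: the S_3-submodule they generate. *)
Definition in_ideal (F : fieldType) (gens : seq (poly3 F)) (g : poly3 F) : Prop :=
  exists c : nat -> 'S_3 -> F, forall m : mono,
    g m = \sum_(k < size gens) \sum_(t : 'S_3) c k t * pact t (nth (@pzero F) gens k) m.

(* Ginzburg-Kapranov pairing on the 12-dimensional space, derived from the
   Lie-admissibility of S (x) U: left-normed monomials get sgn(s), right-normed
   get -sgn(s). *)
Definition eps (F : fieldType) (m : mono) : F :=
  if m.1 then - (-1) ^+ odd_perm m.2 else (-1) ^+ odd_perm m.2.

Definition pairing (F : fieldType) (f g : poly3 F) : F :=
  \sum_(m : mono) eps F m * f m * g m.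

(* The relation space of the Koszul dual: the orthogonal complement. *)
Definition in_dual (F : fieldType) (gens : seq (poly3 F)) (g : poly3 F) : Prop :=
  forall r : poly3 F, in_ideal gens r -> pairing g r = 0.

Definition LS_B1_rels (F : fieldType) : seq (poly3 F) := [:: p_LS F; p_B1 F].
Definition AS_LC_rels (F : fieldType) : seq (poly3 F) := [:: p_AS1 F; p_AS2 F; p_LC F].

(* Main.v *)
Require Import Defs.
From mathcomp Require Import all_boot all_order fingroup perm all_algebra.
From mathcomp Require Import ring.
Set Implicit Arguments. Unset Strict Implicit. Unset Printing Implicit Defensive.
Import GRing.Theory.
Local Open Scope ring_scope.

Definition p0 : 'S_3 := 1%g.
Definition p1 : 'S_3 := tperm o1 o2.
Definition p2 : 'S_3 := tperm o0 o1.
Definition p3 : 'S_3 := (tperm o1 o2 * tperm o0 o1)%g.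
Definition p4 : 'S_3 := (tperm o0 o1 * tperm o1 o2)%g.
Definition p5 : 'S_3 := tperm o0 o2.

Lemma tpE (T : finType) (x y z : T) : tperm x y z = if z == x then y else if z == y then x else z.
Proof. by case: tpermP => [->|->|/eqP/negPf-> /eqP/negPf->]; rewrite ?eqxx //; case: eqP => [->|]. Qed.
Ltac pv := rewrite /p0 /p1 /p2 /p3 /p4 /p5 ?permM ?perm1 ?tpE /=.
Lemma p0v0 : p0 o0 = o0. Proof. by pv. Qed.
Lemma p0v1 : p0 o1 = o1. Proof. by pv. Qed.
Lemma p0v2 : p0 o2 = o2. Proof. by pv. Qed.
Lemma p1v0 : p1 o0 = o0. Proof. by pv. Qed.
Lemma p1v1 : p1 o1 = o2. Proof. by pv. Qed.
Lemma p1v2 : p1 o2 = o1. Proof. by pv. Qed.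
Lemma p2v0 : p2 o0 = o1. Proof. by pv. Qed.
Lemma p2v1 : p2 o1 = o0. Proof. by pv. Qed.
Lemma p2v2 : p2 o2 = o2. Proof. by pv. Qed.
Lemma p3v0 : p3 o0 = o1. Proof. by pv. Qed.
Lemma p3v1 : p3 o1 = o2. Proof. by pv. Qed.
Lemma p3v2 : p3 o2 = o0. Proof. by pv. Qed.
Lemma p4v0 : p4 o0 = o2. Proof. by pv. Qed.
Lemma p4v1 : p4 o1 = o0. Proof. by pv. Qed.
Lemma p4v2 : p4 o2 = o1. Proof. by pv. Qed.
Lemma p5v0 : p5 o0 = o2. Proof. by pv. Qed.
Lemma p5v1 : p5 o1 = o1. Proof. by pv. Qed.
Lemma p5v2 : p5 o2 = o0. Proof. by pv. Qed.
Definition pvals := (p0v0, p0v1, p0v2, p1v0, p1v1, p1v2, p2v0, p2v1, p2v2, p3v0, p3v1, p3v2, p4v0, p4v1, p4v2, p5v0, p5v1, p5v2).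

Lemma odd_p0 : odd_perm p0 = false. Proof. by rewrite /p0 ?odd_permM ?odd_tperm ?odd_perm1. Qed.
Lemma odd_p1 : odd_perm p1 = true. Proof. by rewrite /p1 ?odd_permM ?odd_tperm ?odd_perm1. Qed.
Lemma odd_p2 : odd_perm p2 = true. Proof. by rewrite /p2 ?odd_permM ?odd_tperm ?odd_perm1. Qed.
Lemma odd_p3 : odd_perm p3 = false. Proof. by rewrite /p3 ?odd_permM ?odd_tperm ?odd_perm1. Qed.
Lemma odd_p4 : odd_perm p4 = false. Proof. by rewrite /p4 ?odd_permM ?odd_tperm ?odd_perm1. Qed.
Lemma odd_p5 : odd_perm p5 = true. Proof. by rewrite /p5 ?odd_permM ?odd_tperm ?odd_perm1. Qed.
Definition odd_pv := (odd_p0, odd_p1, odd_p2, odd_p3, odd_p4, odd_p5).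

Definition plist := [:: p0; p1; p2; p3; p4; p5].

Lemma neq_perm (s t : 'S_3) : (s o0 != t o0) || (s o1 != t o1) -> (s == t) = false.
Proof. by move=> H; apply/negbTE; apply: contraTneq H => ->; rewrite !eqxx. Qed.

Lemma plist_uniq : uniq plist.
Proof.
rewrite /plist /= !inE.
by repeat (rewrite neq_perm; last by rewrite !pvals).
Qed.

Lemma plist_all (s : 'S_3) : s \in plist.
Proof.
have hc : #|plist| = #|'S_3| by rewrite card_Sn (card_uniqP plist_uniq).
have := subset_cardP hc (subset_predT _).
by move/(_ s) => ->.
Qed.

Lemma S3_cases (s : 'S_3) : s = p0 \/ s = p1 \/ s = p2 \/ s = p3 \/ s = p4 \/ s = p5.
Proof.
have := plist_all s; rewrite !inE.
by do 5! (case/orP => [/eqP->|]; [tauto|]); move/eqP->; tauto.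
Qed.

Lemma sumS3 (V : nmodType) (G : 'S_3 -> V) :
  \sum_(t : 'S_3) G t = G p0 + G p1 + G p2 + G p3 + G p4 + G p5.
Proof.
have hp : perm_eq (index_enum (perm_of (ordinal 3))) plist.
  by apply: uniq_perm; [exact: index_enum_uniq | exact: plist_uniq | move=> x; rewrite mem_index_enum plist_all].
by rewrite (perm_big _ hp) /plist !big_cons big_nil /= addr0 !addrA.
Qed.

Lemma sum_mono (V : nmodType) (G : mono -> V) :
  \sum_(m : mono) G m = \sum_(b : bool) \sum_(s : 'S_3) G (b, s).
Proof. by rewrite pair_big /=; apply: eq_bigr => -[b s]. Qed.

Lemma invE (t : 'S_3) x i : ((t^-1)%g x == i) = (x == t i).
Proof. by apply/eqP/eqP => [<-|->]; rewrite ?permKV ?permK. Qed.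

Lemma monM (F : fieldType) b i j k b' (s t : 'S_3) :
  mon F b i j k (b', (s * t^-1)%g) = mon F b (t i) (t j) (t k) (b', s).
Proof. by rewrite /mon /= !permM !invE. Qed.


Section G.
Variable F : fieldType.
Definition gLS (i j k : 'I_3) : poly3 F := psub (assoc F i j k) (assoc F j i k).
Definition gB1 (i j k : 'I_3) : poly3 F :=
  padd (psub (L F i j k) (L F j i k))
  (padd (psub (L F k i j) (L F i k j)) (psub (L F j k i) (L F k j i))).
Definition gAS2 (i j k : 'I_3) : poly3 F := psub (assoc F i j k) (assoc F i k j).
Definition gLC (i j k : 'I_3) : poly3 F := psub (R F i j k) (R F j i k).

Lemma pact_LS u i j k m : pact u (gLS i j k) m = gLS (u i) (u j) (u k) m.
Proof. by case: m => b s; rewrite /pact /gLS /psub /assoc /psub /L /R /= !monM. Qed.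
Lemma pact_B1 u i j k m : pact u (gB1 i j k) m = gB1 (u i) (u j) (u k) m.
Proof. by case: m => b s; rewrite /pact /gB1 /padd /psub /L /= !monM. Qed.
Lemma pact_AS2 u i j k m : pact u (gAS2 i j k) m = gAS2 (u i) (u j) (u k) m.
Proof. by case: m => b s; rewrite /pact /gAS2 /psub /assoc /psub /L /R /= !monM. Qed.
Lemma pact_LC u i j k m : pact u (gLC i j k) m = gLC (u i) (u j) (u k) m.
Proof. by case: m => b s; rewrite /pact /gLC /psub /L /R /= !monM. Qed.

Lemma pairing_ext (f f' h h' : poly3 F) :
  (forall m, f m = f' m) -> (forall m, h m = h' m) -> pairing f h = pairing f' h'.
Proof. by move=> ef eh; rewrite /pairing; apply: eq_bigr => m _; rewrite ef eh. Qed.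

End G.

Ltac ev := rewrite /pairing sum_mono big_bool !sumS3 /= /gLS /gB1 /gAS2 /gLC /p_LS /p_B1 /p_AS1 /p_AS2 /p_LC
  /assoc /padd /psub /L /R /mon /eps /= ?pvals ?odd_pv /= ?expr0 ?expr1.


Section Main.
Variable F : fieldType.

Lemma pairing_pLS (f : poly3 F) u : pairing f (pact u (p_LS F)) = pairing f (gLS F (u o0) (u o1) (u o2)).
Proof. by apply: pairing_ext => // m; exact: pact_LS. Qed.
Lemma pairing_pB1 (f : poly3 F) u : pairing f (pact u (p_B1 F)) = pairing f (gB1 F (u o0) (u o1) (u o2)).
Proof. by apply: pairing_ext => // m; exact: pact_B1. Qed.

Lemma key_zero (k : 'I_3) (k' : 'I_2) u :
  pairing (nth (@pzero F) (AS_LC_rels F) k) (pact u (nth (@pzero F) (LS_B1_rels F) k')) = 0.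
Proof.
case: k => [[|[|[|//]]] ?]; case: k' => [[|[|//]] ?] /=;
  rewrite ?pairing_pLS ?pairing_pB1;
  case: (S3_cases u) => [->|[->|[->|[->|[->|->]]]]]; rewrite !pvals; ev; ring.
Qed.

Lemma pairing_sumL (I : finType) (G : I -> poly3 F) h :
  pairing (fun m => \sum_i G i m) h = \sum_i pairing (G i) h.
Proof.
rewrite /pairing exchange_big /=; apply: eq_bigr => m _.
by rewrite mulr_sumr mulr_suml.
Qed.
Lemma pairing_sumR (I : finType) (G : I -> poly3 F) f :
  pairing f (fun m => \sum_i G i m) = \sum_i pairing f (G i).
Proof.
rewrite /pairing exchange_big /=; apply: eq_bigr => m _.
by rewrite mulr_sumr.
Qed.
Lemma pairing_scaleL c (f h : poly3 F) : pairing (fun m => c * f m) h = c * pairing f h.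
Proof. by rewrite /pairing mulr_sumr; apply: eq_bigr => m _; ring. Qed.
Lemma pairing_scaleR c (f h : poly3 F) : pairing f (fun m => c * h m) = c * pairing f h.
Proof. by rewrite /pairing mulr_sumr; apply: eq_bigr => m _; ring. Qed.

Lemma eps_mul b (s t : 'S_3) : eps F (b, (s * t)%g) = eps F (b, s) * (-1) ^+ odd_perm t.
Proof. by rewrite /eps /= odd_permM signr_addb; case: b => //; rewrite mulNr. Qed.

Lemma pairing_pact (t t' : 'S_3) (f h : poly3 F) :
  pairing (pact t f) (pact t' h) = (-1) ^+ odd_perm t * pairing f (pact (t' * t^-1)%g h).
Proof.
rewrite /pairing (reindex_inj (h := fun m : mono => (m.1, (m.2 * t)%g))) /=; last first.
  by move=> [b s] [b' s'] /= [-> /mulIg ->].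
rewrite mulr_sumr; apply: eq_bigr => -[b s] _ /=.
rewrite eps_mul /pact /= mulgK invMg invgK mulgA.
by rewrite -!mulrA mulrCA.
Qed.

Lemma gen_in (gens : seq (poly3 F)) (k : nat) (t : 'S_3) :
  (k < size gens)%N -> in_ideal gens (pact t (nth (@pzero F) gens k)).
Proof.
move=> hk; exists (fun k' t' => if (k' == k) && (t' == t) then 1 else 0) => m.
rewrite (bigD1 (Ordinal hk)) //= (bigD1 t) //= !eqxx mul1r big1 ?addr0; last first.
  by move=> t' /negbTE ->; rewrite andbF mul0r.
rewrite big1 ?addr0 // => k' hk'; apply: big1 => t' _.
have -> : (nat_of_ord k' == k) = false.
  by apply/negbTE; apply: contra hk' => /eqP e; apply/eqP/val_inj.
by rewrite mul0r.
Qed.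

Lemma dir2 (g : poly3 F) : in_ideal (AS_LC_rels F) g -> in_dual (LS_B1_rels F) g.
Proof.
move=> [c Hc] r [d Hd].
rewrite (pairing_ext Hc Hd) pairing_sumL; apply: big1 => k _.
rewrite pairing_sumL; apply: big1 => t _.
rewrite pairing_scaleL pairing_sumR big1 ?mulr0 // => k' _.
rewrite pairing_sumR big1 // => t' _.
by rewrite pairing_scaleR pairing_pact (key_zero k k') !mulr0.
Qed.

Definition cf (g : poly3 F) (k : nat) (t : 'S_3) : F :=
 match k, nat_of_ord (t o0), nat_of_ord (t o1) with
 | 0, 0, 1 => - g (false,p2) + g (true,p3) + g (true,p5)
 | 0, 0, 2 => - g (false,p4)
 | 0, 1, 2 => - g (false,p5)
 | 1, 0, 1 => g (true,p1) + g (true,p4)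
 | 1, 1, 0 => g (true,p3) + g (true,p5)
 | 2, 0, 1 => - g (false,p2) - g (true,p2)
 | 2, 0, 2 => - g (false,p4) - g (true,p4)
 | 2, 1, 2 => - g (false,p5) - g (true,p5)
 | _, _, _ => 0 end.

Lemma AS_E : AS_LC_rels F = [:: gLS F o0 o1 o2; gAS2 F o0 o1 o2; gLC F o0 o1 o2].
Proof. by []. Qed.

Lemma dir1 (g : poly3 F) : in_dual (LS_B1_rels F) g -> in_ideal (AS_LC_rels F) g.
Proof.
move=> Hd.
have E k t : (k < 2)%N -> pairing g (pact t (nth (@pzero F) (LS_B1_rels F) k)) = 0.
  by move=> hk; apply: Hd; apply: gen_in.
have hx1 : g (false,p1) = - g (false,p4) - g (true,p1) - g (true,p4).
  have h := E 0%N p1 isT; rewrite -oppr0 in h; move/(congr1 (fun x => - x)): h; rewrite opprK => h.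
  apply/eqP; rewrite -subr_eq0 -h; apply/eqP; rewrite /= pairing_pLS !pvals; ev; ring.
have hx3 : g (false,p3) = - g (false,p5) - g (true,p3) - g (true,p5).
  have h := E 0%N p3 isT.
  apply/eqP; rewrite -subr_eq0 -h; apply/eqP; rewrite /= pairing_pLS !pvals; ev; ring.
have hx0 : g (false,p0) = - g (false,p2) + g (true,p1) + g (true,p3) + g (true,p4) + g (true,p5).
  have h := E 1%N p0 isT.
  apply/eqP; rewrite -subr_eq0 -h; apply/eqP; rewrite /= pairing_pB1 !pvals; ev; rewrite hx1 hx3; ring.
have hx6 : g (true,p0) = - g (true,p1) - g (true,p2) - g (true,p3) - g (true,p4) - g (true,p5).
  have h := E 0%N p0 isT.
  apply/eqP; rewrite -subr_eq0 -h; apply/eqP; rewrite /= pairing_pLS !pvals; ev; rewrite hx0; ring.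
exists (cf g) => -[b s].
rewrite AS_E /= !big_ord_recl big_ord0 /= !sumS3 /cf !pvals /= !mul0r ?add0r ?addr0.
rewrite ?pact_LS ?pact_AS2 ?pact_LC !pvals.
case: (S3_cases s) => [->|[->|[->|[->|[->|->]]]]]; case: b;
  rewrite /gLS /gAS2 /gLC /assoc /psub /L /R /mon /= !pvals /= ?hx0 ?hx1 ?hx3 ?hx6; ring.
Qed.

End Main.

Local Close Scope ring_scope.

Theorem mainTheorem4 (F : fieldType) (hchar : [pchar F]%R =i pred0) :
  forall g : poly3 F, in_dual (LS_B1_rels F) g <-> in_ideal (AS_LC_rels F) g.
Proof. by move=> g; split; [exact: dir1 | exact: dir2]. Qed.
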